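(* Every uniform, non-singular, IC-pseudo injective right $R$-module is quasi-pseudo principally injective.
   Context: All rings are associative with identity and all modules are unitary right $R$-modules. A nonzero module $U$ is uniform if every nonzero submodule of $U$ is essential in $U$. For a module $M$, $Z(M)=\{x\in M: xI=0$ for some essential right ideal $I$ of $R\}$; $M$ is non-singular if $Z(M)=0$. A submodule $A$ of $M$ is closed if it has no proper essential extension inside $M$. For modules $M,N$, $N$ is IC-pseudo $M$-injective if for every submodule $A$ of $M$ that is isomorphic to a closed submodule of $M$, every $R$-monomorphism $A\to N$ extends to an $R$-homomorphism $M\to N$; $M$ is IC-pseudo injective if it is IC-pseudo $M$-injective. A submodule $N$ of $M$ is $M$-cyclic if $N\cong M/L$ for some submodule $L$ of $M$ (equivalently, $N$ is the image of an endomorphism of $M$). $M$ is quasi-pseudo principally injective if for every $M$-cyclic submodule $A$ of $M$, every $R$-monomorphism $A\to M$ extends to an $R$-endomorphism of $M$. *)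

(* Defs.v *)
(* A right R-module is encoded as a left module over the
   converse ring R^c: the right action m.r is  (r : R^c) *: m . *)
From HB Require Import structures.
From mathcomp Require Import all_boot all_order all_algebra.
Set Implicit Arguments. Unset Strict Implicit. Unset Printing Implicit Defensive.
Import GRing.Theory.
Local Open Scope ring_scope.

Section ModuleDefs.
Variable R : pzRingType.

Definition ract (M : lmodType R^c) (m : M) (r : R) : M := (r : R^c) *: m.

Definition submodule (M : lmodType R^c) (A : M -> Prop) : Prop :=
  [/\ A 0, (forall x y, A x -> A y -> A (x + y))
         & (forall x (r : R), A x -> A (ract x r))].

Definition essential_in (M : lmodType R^c) (B A : M -> Prop) : Prop :=
  [/\ submodule B, submodule A, (forall x, B x -> A x)
    & forall X : M -> Prop, submodule X -> (forall x, X x -> A x) ->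
        (exists x, X x /\ x <> 0) -> exists x, X x /\ B x /\ x <> 0].

Definition fullset (M : lmodType R^c) : M -> Prop := fun _ => True.

Definition uniform (M : lmodType R^c) : Prop :=
  (exists x : M, x <> 0) /\
  forall B : M -> Prop, submodule B -> (exists x, B x /\ x <> 0) ->
    essential_in B (@fullset M).

Definition right_ideal (I : R -> Prop) : Prop :=
  [/\ I 0, (forall x y, I x -> I y -> I (x + y)) & (forall x r, I x -> I (x * r))].

Definition essential_right_ideal (I : R -> Prop) : Prop :=
  right_ideal I /\
  forall J : R -> Prop, right_ideal J -> (exists x, J x /\ x <> 0) ->
    exists x, J x /\ I x /\ x <> 0.

Definition singular_elt (M : lmodType R^c) (x : M) : Prop :=
  exists I : R -> Prop, essential_right_ideal I /\ forall a, I a -> ract x a = 0.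

Definition nonsingular (M : lmodType R^c) : Prop :=
  forall x : M, singular_elt x -> x = 0.

Definition closed_sub (M : lmodType R^c) (A : M -> Prop) : Prop :=
  submodule A /\
  forall B : M -> Prop, submodule B -> essential_in A B -> forall x, B x -> A x.

Definition mono_on (M N : lmodType R^c) (A : M -> Prop) (f : M -> N) : Prop :=
  [/\ (forall x y, A x -> A y -> f (x + y) = f x + f y),
      (forall x r, A x -> f (ract x r) = ract (f x) r)
    & (forall x y, A x -> A y -> f x = f y -> x = y)].

Definition iso_sub (M : lmodType R^c) (A C : M -> Prop) : Prop :=
  exists h : M -> M, [/\ mono_on A h, (forall x, A x -> C (h x))
                       & (forall y, C y -> exists x, A x /\ h x = y)].

Definition mono_extends (M N : lmodType R^c) (A : M -> Prop) : Prop :=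
  forall f : M -> N, mono_on A f ->
    exists g : {linear M -> N}, forall x, A x -> g x = f x.

Definition IC_pseudo_inj (M N : lmodType R^c) : Prop :=
  forall A : M -> Prop, submodule A ->
    (exists C : M -> Prop, closed_sub C /\ iso_sub A C) ->
    mono_extends N A.

Definition IC_pseudo_injective (M : lmodType R^c) : Prop := IC_pseudo_inj M M.

Definition M_cyclic (M : lmodType R^c) (A : M -> Prop) : Prop :=
  exists f : {linear M -> M}, forall y, A y <-> exists x, f x = y.

Definition quasi_pseudo_principally_injective (M : lmodType R^c) : Prop :=
  forall A : M -> Prop, submodule A -> M_cyclic A -> mono_extends M A.

End ModuleDefs.

(* Main.v *)
Require Import Defs.
From HB Require Import structures.
From mathcomp Require Import all_boot all_order all_algebra.
From Stdlib Require Import Classical ClassicalEpsilon.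
Import GRing.Theory.
Local Open Scope ring_scope.

Section Aux.
Variable R : pzRingType.
Variable M : lmodType R^c.

Lemma ract_lin (f : {linear M -> M}) x r : f (ract x r) = ract (f x) r.
Proof. by rewrite /ract linearZ. Qed.

Lemma ract_mul (x : M) (a r : R) : ract x (a * r) = ract (ract x a) r.
Proof. rewrite /ract scalerA. reflexivity. Qed.

Lemma ract_0r (x : M) : ract x 0 = 0.
Proof. by rewrite /ract scale0r. Qed.

Lemma ract_r0 (r : R) : ract (0 : M) r = 0.
Proof. by rewrite /ract scaler0. Qed.

Lemma inj_of (f : {linear M -> M}) :
  uniform M -> nonsingular M -> (exists x0, f x0 <> 0) -> injective f.
Proof.
move=> [_ Hu] Hns [x0 Hx0].
have key : forall k, f k = 0 -> k = 0.
  move=> k Hk; apply: NNPP => Hk0.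
  pose K := fun y : M => f y = 0.
  have subK : submodule K.
    split; rewrite /K ?linear0 //.
      by move=> x y Hx Hy; rewrite linearD Hx Hy addr0.
    by move=> x r Hx; rewrite ract_lin Hx ract_r0.
  have [_ _ _ Ess] := Hu K subK (ex_intro _ k (conj Hk Hk0)).
  apply: Hx0; apply: Hns.
  exists (fun a => K (ract x0 a)); split.
    split.
      split; rewrite /K ?ract_0r ?linear0 //.
        by move=> x y Hx Hy; rewrite /ract scalerDl linearD -/(ract x0 x) -/(ract x0 y) Hx Hy addr0.
      by move=> x r Hx; rewrite /K ract_mul ract_lin Hx ract_r0.
    move=> J [J0 JD JM] [j [Jj Jj0]].
    case: (classic (exists j, J j /\ j <> 0 /\ ract x0 j = 0)).
      move=> [j' [H1 [H2 H3]]]; exists j'; split => //; split => //.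
      by rewrite /K H3 linear0.
    move=> Hno.
    pose X := fun y : M => exists j, J j /\ ract x0 j = y.
    have subX : submodule X.
      split.
      - by exists 0; split => //; rewrite ract_0r.
      - move=> x y [a [Ja <-]] [b [Jb <-]]; exists (a + b); split; first by apply: JD.
        by rewrite /ract scalerDl.
      - move=> x r [a [Ja <-]]; exists (a * r); split; first by apply: JM.
        by rewrite ract_mul.
    have [y [[a [Ja <-]] [Ka Hy]]] : exists y, X y /\ K y /\ y <> 0.
      apply: Ess => //.
      exists (ract x0 j); split; first by exists j.
      by move=> H; apply: Hno; exists j.
    exists a; split => //; split => //.
    by move=> Ha; apply: Hy; rewrite Ha ract_0r.
  by move=> a Ha; rewrite -ract_lin.
move=> x y Hxy; apply/eqP; rewrite -subr_eq0; apply/eqP; apply: key.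
by rewrite linearB Hxy subrr.
Qed.

End Aux.

Theorem proposition2p11 (R : pzRingType) (M : lmodType R^c) :
  uniform M -> nonsingular M -> IC_pseudo_injective M ->
  quasi_pseudo_principally_injective M.
Proof.
move=> Hu Hns Hic A subA [f Hf].
apply: Hic => //.
case: (classic (exists x0, f x0 <> 0)) => Hex.
- have finj := @inj_of R M f Hu Hns Hex.
  pose h := fun y : M => epsilon (inhabits (0 : M)) (fun x => f x = y).
  have hP : forall y, A y -> f (h y) = y.
    move=> y /Hf Hy; exact: (epsilon_spec (inhabits (0 : M)) (fun x => f x = y) Hy).
  have [A0 AD AM] := subA.
  exists (@fullset _ M); split.
    split; first by split.
    by [].
  exists h; split => //.
  + split.
    * move=> x y Hx Hy; apply: finj.
      by rewrite linearD !hP //; apply: AD.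
    * move=> x r Hx; apply: finj.
      by rewrite ract_lin !hP //; apply: AM.
    * by move=> x y Hx Hy Hh; rewrite -(hP x Hx) -(hP y Hy) Hh.
  + move=> y _; exists (f y); split; first by apply/Hf; exists y.
    by apply: finj; rewrite hP //; apply/Hf; exists y.
- have A0 : forall y, A y -> y = 0.
    move=> y /Hf [x <-]; apply: NNPP => H; apply: Hex; by exists x.
  exists A; split.
    split => // B subB [_ _ sAB Ess] x Bx.
    case: (classic (x = 0)) => [->|Hx]; first by case: subA.
    have [y [_ [Ay Hy]]] := Ess B subB (fun _ h => h) (ex_intro _ x (conj Bx Hx)).
    by case: Hy; apply: A0.
  exists id; split => //; last by move=> y Ay; exists y.
Qed.
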